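(* For integers $m\ge1$ and $k\ge0$, $$\mu(N|_m,k,J)=\mu(P|_m,k,L)\qquad\text{and}\qquad \mu(P|_m,k,J^{*})=\mu(Q|_m,k,J^{*}).$$
   Context: Let $N=\{0,1,2,\ldots\}$, $J=\{(2n+1)2^{2k}-1 : n,k\in N\}$, $J^{*}=\{(2n+1)2^{2k}-1 : n,k\in N,\ k>0\}$, $K=N\setminus J$, $L=N\setminus J^{*}$, $P=\{k\in N: k\equiv0,3\pmod 4\}$, $Q=\{k\in N: k\equiv 1,2\pmod 4\}$. For an infinite set $A\subseteq N$, $A|_m$ denotes the set of the $m$ smallest elements of $A$. An involution on a finite set $A$ is a permutation $\sigma$ of $A$ with $\sigma=\sigma^{-1}$; its cycles are fixed points and transpositions $(c,d)$. A transposition $(c,d)$ is said to be in a set $B$ if $c+d\in B$. For a finite set $A\subseteq N$, an integer $k\ge0$ and a set $B\subseteq N$, $\mu(A,k,B)$ denotes the number of involutions of $A$ having exactly $k$ transpositions, all of which are in $B$. *)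

(* Defs.v *)
From mathcomp Require Import all_boot all_order all_fingroup.
From mathcomp Require Import zify.
Set Implicit Arguments. Unset Strict Implicit. Unset Printing Implicit Defensive.

(* J = {(2n+1)2^(2k) - 1 : n,k in N}.  Witnesses satisfy n,k <= x, so the
   bounded quantifiers are exactly the unbounded ones. *)
Definition J : pred nat := fun x =>
  [exists n : 'I_x.+1, exists k : 'I_x.+1, x.+1 == (2 * n + 1) * 2 ^ (2 * k)].
Definition Jstar : pred nat := fun x =>
  [exists n : 'I_x.+1, exists k : 'I_x.+1,
     (0 < k) && (x.+1 == (2 * n + 1) * 2 ^ (2 * k))].
Definition K : pred nat := fun x => ~~ J x.
Definition L : pred nat := fun x => ~~ Jstar x.
Definition Nset : pred nat := predT.
Definition P : pred nat := fun x => (x %% 4 == 0) || (x %% 4 == 3).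
Definition Q : pred nat := fun x => (x %% 4 == 1) || (x %% 4 == 2).

Definition infinite_pred (A : pred nat) := forall n, exists x, (n <= x) && A x.

Section Trunc.
Variables (A : pred nat) (hA : infinite_pred A).
Definition next_in (n : nat) : nat := ex_minn (hA n).
Fixpoint elem_in (i : nat) : nat :=
  match i with 0 => next_in 0 | i'.+1 => next_in (elem_in i').+1 end.
(* A|_m, as the (increasing) list of its elements *)
Definition trunc (m : nat) : seq nat := [seq elem_in i | i <- iota 0 m].
End Trunc.

Lemma infinite_N : infinite_pred Nset.
Proof. by move=> n; exists n; rewrite leqnn. Qed.
Lemma infinite_P : infinite_pred P.
Proof.
move=> n; exists (4 * n); apply/andP; split; first lia.
by rewrite /P modnMr eqxx.
Qed.
Lemma infinite_Q : infinite_pred Q.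
Proof.
move=> n; exists (4 * n + 1); apply/andP; split; first lia.
by rewrite /P /Q -modnDm modnMr.
Qed.

(* Involutions sigma of the finite set A (permutations of the finite type of
   elements of A with sigma = sigma^-1) having exactly k transpositions
   (c,d) (counted once each, as the pairs with c < d = sigma c), all of
   which are in B, i.e. c + sigma c \in B whenever sigma c <> c. *)
Definition mu (A : seq nat) (k : nat) (B : pred nat) : nat :=
  #|[set s : {perm seq_sub A} |
      [&& (s^-1)%g == s,
          #|[set x : seq_sub A | val x < val (s x)]| == k &
          [forall x : seq_sub A, (s x != x) ==> B (val x + val (s x))]]]|.

(* Main.v *)
Require Import Defs.
From mathcomp Require Import all_boot all_order all_fingroup.
From mathcomp Require Import zify.


Lemma v_odd n : odd n -> logn 2 n = 0.
Proof. by move=> h; apply: logn_coprime; rewrite coprime2n. Qed.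

Lemma v_double n : 0 < n -> logn 2 (2 * n) = (logn 2 n).+1.
Proof. by move=> h; rewrite lognM // (pfactorK 1). Qed.

Lemma decomp x : exists2 a, x.+1 = (2 * a + 1) * 2 ^ logn 2 x.+1 & 2 * a + 1 <= x.+1.
Proof.
have [m cm e] := pfactor_coprime (isT : prime 2) (ltn0Sn x).
rewrite coprime2n in cm.
have hm : m = 2 * m./2 + 1 by rewrite -{1}(odd_double_half m) cm addnC -muln2 mulnC.
exists m./2; rewrite -hm //.
by rewrite {1}e leq_pmulr // expn_gt0.
Qed.

Lemma v_form a e : logn 2 ((2 * a + 1) * 2 ^ e) = e.
Proof.
rewrite lognM ?expn_gt0 ?addn1 // (pfactorK _ (isT : prime 2)) v_odd //.
by rewrite /= oddM.
Qed.

Lemma JE x : J x = ~~ odd (logn 2 x.+1).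
Proof.
apply/idP/idP.
  case/existsP=> n /existsP [k /eqP ->]; rewrite v_form.
  by rewrite oddM.
move=> he; have [a ha hle] := decomp x.
set e := logn 2 x.+1 in ha he.
have ee : e = 2 * e./2 by rewrite -{1}(odd_double_half e) (negbTE he) add0n -mul2n.
have hel : e < 2 ^ e := ltn_expl e (isT : 1 < 2).
have hex : 2 ^ e <= x.+1 by rewrite ha leq_pmull // addn1.
have h1 : a < x.+1 by lia.
have h2 : e./2 < x.+1 by lia.
apply/existsP; exists (Ordinal h1).
apply/existsP; exists (Ordinal h2).
by rewrite /= -ee ha.
Qed.

Lemma JstarE x : Jstar x = ~~ odd (logn 2 x.+1) && (0 < logn 2 x.+1).
Proof.
apply/idP/idP.
  case/existsP=> n /existsP [k /andP [k0 /eqP ->]]; rewrite v_form.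
  rewrite oddM /=; lia.
case/andP=> he e0; have [a ha hle] := decomp x.
set e := logn 2 x.+1 in ha he e0.
have ee : e = 2 * e./2 by rewrite -{1}(odd_double_half e) (negbTE he) add0n -mul2n.
have hel : e < 2 ^ e := ltn_expl e (isT : 1 < 2).
have hex : 2 ^ e <= x.+1 by rewrite ha leq_pmull // addn1.
have h1 : a < x.+1 by lia.
have h2 : e./2 < x.+1 by lia.
apply/existsP; exists (Ordinal h1).
apply/existsP; exists (Ordinal h2).
rewrite /= -ee ha eqxx andbT; lia.
Qed.

Definition fP i := 2 * i + odd i.
Definition gQ x := if odd x then x.-1 else x.+1.

Lemma edge1 c d : J (c + d) = L (fP c + fP d).
Proof.
rewrite /L JE JstarE /fP.
have ec := odd_double_half c; have ed := odd_double_half d.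
case hc: (odd c); case hd: (odd d); rewrite /= in ec ed *.
- have -> : (2 * c + 1 + (2 * d + 1)).+1 = (2 * (c + d + 1)).+1 by lia.
  rewrite (@v_odd (2 * (c + d + 1)).+1); last by rewrite oddS oddM.
  rewrite v_odd //; by rewrite oddS oddD hc hd.
- have -> : (2 * c + 1 + (2 * d + 0)).+1 = 2 * (c + d).+1 by lia.
  by rewrite v_double //= negbK andbT.
- have -> : (2 * c + 0 + (2 * d + 1)).+1 = 2 * (c + d).+1 by lia.
  by rewrite v_double //= negbK andbT.
- have -> : (2 * c + 0 + (2 * d + 0)).+1 = (2 * (c + d)).+1 by lia.
  rewrite (@v_odd (2 * (c + d)).+1); last by rewrite oddS oddM.
  rewrite v_odd //; by rewrite oddS oddD hc hd.
Qed.

Lemma Jstar_odd x : Jstar x -> odd x.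
Proof.
rewrite JstarE; case/andP=> _ h.
apply: contraLR h; rewrite -oddS => h; by rewrite v_odd // ltnn.
Qed.

Lemma edge2 x y : P x -> P y -> Jstar (gQ x + gQ y) = Jstar (x + y).
Proof.
rewrite /P /gQ => hx hy.
have ex := odd_double_half x; have ey := odd_double_half y.
case ox: (odd x); case oy: (odd y); rewrite ox oy /= in ex ey.
- have -> : x.-1 + y.-1 = x + y - 2 by lia.
  apply/idP/idP => /Jstar_odd; lia.
- congr Jstar; lia.
- congr Jstar; lia.
- apply/idP/idP => /Jstar_odd; lia.
Qed.

Lemma next_inE (A : pred nat) (hA : infinite_pred A) n y :
  n <= y -> A y -> (forall z, n <= z -> z < y -> ~~ A z) -> next_in hA n = y.
Proof.
move=> ny Ay hz; rewrite /next_in; case: ex_minnP => x /andP [nx Ax] hmin.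
have xy : x <= y by apply: hmin; rewrite ny Ay.
case: (ltnP x y) => h; last by apply/eqP; rewrite eqn_leq xy h.
by move: (hz x nx h); rewrite Ax.
Qed.

Lemma elemN i : elem_in infinite_N i = i.
Proof.
elim: i => [|i IH] /=; apply: next_inE => //; try lia.

Qed.

Lemma elemP i : elem_in infinite_P i = fP i.
Proof.
elim: i => [|i IH] /=.
  apply: next_inE => //; lia.
rewrite IH; apply: next_inE; rewrite /fP /P /=;
have ei := odd_double_half i; case hi: (odd i); rewrite /= in ei *.
- lia.
- lia.
- apply/orP; lia.
- apply/orP; lia.
- move=> z ? ?; apply/negP => /orP; lia.
- move=> z ? ?; apply/negP => /orP; lia.
Qed.

Lemma elemQ i : elem_in infinite_Q i = gQ (fP i).
Proof.
elim: i => [|i IH] /=.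
  rewrite /gQ /fP /=; apply: next_inE => // z _; rewrite ltnS leqn0 => /eqP ->. by [].
rewrite IH; apply: next_inE; rewrite /fP /Q /gQ /= ?oddD ?oddM /=;
have ei := odd_double_half i; case hi: (odd i); rewrite /= in ei *.
- lia.
- lia.
- apply/orP; lia.
- apply/orP; lia.
- move=> z ? ?; apply/negP => /orP; lia.
- move=> z ? ?; apply/negP => /orP; lia.
Qed.

Lemma card_bij (T1 T2 : finType) (f : T1 -> T2) (g : T2 -> T1) (p : pred T1) :
  cancel f g -> cancel g f ->
  #|[set x | p x]| = #|[set y | p (g y)]|.
Proof.
move=> fK gK; rewrite -(card_imset _ (can_inj fK)).
rewrite (can2_imset_pre _ fK gK); apply: eq_card => y; by rewrite !inE.
Qed.

Arguments card_bij {T1 T2 f g p}.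

Lemma forall_bij (T1 T2 : finType) (f : T1 -> T2) (g : T2 -> T1) (p : pred T1) :
  cancel f g -> [forall x, p x] = [forall y, p (g y)].
Proof.
move=> fK; apply/forallP/forallP => h x //.
by rewrite -(fK x).
Qed.

Arguments forall_bij {T1 T2 f g p}.

Lemma invoE (T : finType) (s : {perm T}) : (s^-1 == s)%g = [forall x, s (s x) == x].
Proof.
apply/eqP/forallP => [h x|h].
  by rewrite -{1}h permK.
apply/permP => x; apply: (@perm_inj _ s); rewrite permKV; exact/esym/eqP.
Qed.

Lemma mu_transport (s t : seq nat) (h h' : nat -> nat) (B B' : pred nat) k :
  t = map h s -> {in s, cancel h h'} ->
  {in s &, forall x y, (h x < h y) = (x < y)} ->
  {in s &, forall x y, B' (h x + h y) = B (x + y)} ->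
  mu s k B = mu t k B'.
Proof.
move=> ht hK hmono hedge.
have memphi : forall x : seq_sub s, h (ssval x) \in t.
  by move=> x; rewrite ht map_f // ssvalP.
have mempsi : forall y : seq_sub t, h' (ssval y) \in s.
  move=> y; have : ssval y \in map h s by rewrite -ht; exact: ssvalP.
  case/mapP => [x xs ->]; by rewrite hK.
pose phi := fun x : seq_sub s => (SeqSub (memphi x) : seq_sub t).
pose psi := fun y : seq_sub t => (SeqSub (mempsi y) : seq_sub s).
have phiK : cancel phi psi.
  by move=> x; apply: val_inj => /=; rewrite hK // ssvalP.
have psiK : cancel psi phi.
  move=> y; apply: val_inj => /=; have : ssval y \in map h s by rewrite -ht; exact: ssvalP.
  case/mapP => [x xs ->].
  by rewrite hK.
have vpsi : forall y, val y = h (val (psi y)).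
  by move=> y; rewrite -{1}(psiK y).
have injG : forall tau : {perm seq_sub t}, injective (psi \o tau \o phi).
  by move=> tau x y /= /(can_inj psiK) /perm_inj /(can_inj phiK).
have injF : forall sg : {perm seq_sub s}, injective (phi \o sg \o psi).
  by move=> sg x y /= /(can_inj phiK) /perm_inj /(can_inj psiK).
pose G := fun tau => perm (injG tau).
pose F := fun sg => perm (injF sg).
have GK : cancel G F.
  move=> tau; apply/permP => y; rewrite !permE /= !permE /= psiK; by rewrite psiK.
have FK : cancel F G.
  move=> sg; apply/permP => y; rewrite !permE /= !permE /= phiK; by rewrite phiK.
rewrite /mu (card_bij FK GK); apply: eq_card => tau; rewrite !inE.
have Ge : forall x, G tau x = psi (tau (phi x)) by move=> x; rewrite permE.
congr [&& _, _ & _].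
- rewrite !invoE (forall_bij phiK); apply: eq_forallb => y.
  by rewrite !Ge !psiK (inj_eq (can_inj psiK)).
- congr (_ == k); rewrite (card_bij phiK psiK); apply: eq_card => y.
  rewrite !inE Ge psiK (vpsi y) (vpsi (tau y)) hmono //; exact: ssvalP.
- rewrite (forall_bij phiK); apply: eq_forallb => y.
  rewrite Ge psiK (inj_eq (can_inj psiK)) (vpsi y) (vpsi (tau y)) hedge //; exact: ssvalP.
Qed.

Lemma next_in_mem (A : pred nat) (hA : infinite_pred A) n : A (next_in hA n).
Proof. by rewrite /next_in; case: ex_minnP => x /andP []. Qed.

Lemma elem_mem (A : pred nat) (hA : infinite_pred A) i : A (elem_in hA i).
Proof. case: i => [|i] /=; exact: next_in_mem. Qed.

Lemma truncN m : trunc infinite_N m = iota 0 m.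
Proof. by rewrite /trunc (eq_map elemN) map_id. Qed.

Lemma truncP m : trunc infinite_P m = map fP (trunc infinite_N m).
Proof. by rewrite truncN /trunc (eq_map elemP). Qed.

Lemma truncQ m : trunc infinite_Q m = map gQ (trunc infinite_P m).
Proof. by rewrite /trunc (eq_map elemQ) -map_comp; apply: eq_map => i /=; rewrite elemP. Qed.

Lemma gQK x : gQ (gQ x) = x.
Proof.
rewrite -(odd_double_half x); case: (odd x) => /=; rewrite ?add1n ?add0n /gQ /=.
  by rewrite odd_double /= odd_double.
by rewrite odd_double /= odd_double.
Qed.

Lemma gQmono x y : P x -> P y -> (gQ x < gQ y) = (x < y).
Proof.
rewrite /P /gQ => hx hy.
have ex := odd_double_half x; have ey := odd_double_half y.
case ox: (odd x); case oy: (odd y); rewrite /= in ex ey;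
  apply/idP/idP; move/orP: hx; move/orP: hy; lia.
Qed.

Theorem lemma2p2 (m k : nat) : 1 <= m ->
  mu (trunc infinite_N m) k J = mu (trunc infinite_P m) k L /\
  mu (trunc infinite_P m) k Jstar = mu (trunc infinite_Q m) k Jstar.
Proof.
move=> _; split.
  apply: (@mu_transport _ _ fP half _ _ _ (truncP m)).
  - by move=> i _; rewrite /fP addnC mul2n half_bit_double.
  - move=> x y _ _; rewrite /fP.
    have ex := odd_double_half x; have ey := odd_double_half y.
    case: (odd x) ex; case: (odd y) ey => /= ey ex; apply/idP/idP; lia.
  - by move=> x y _ _; rewrite edge1.
have memP : {in trunc infinite_P m, forall x, P x}.
  by move=> x /mapP [i _ ->]; exact: elem_mem.
apply: (@mu_transport _ _ gQ gQ _ _ _ (truncQ m)).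
- by move=> x _; rewrite gQK.
- by move=> x y /memP hx /memP hy; rewrite gQmono.
- by move=> x y /memP hx /memP hy; rewrite edge2.
Qed.
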